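(* Assume that $1 \le t \le r$ and $k \in \mathbb{Z}$. Then we have \begin{equation*} \sum_{s = 0}^r(-1)^s\begin{bmatrix} r \\ s \end{bmatrix} \begin{bmatrix} t + k - s -1 \\ t - 1 \end{bmatrix} \begin{bmatrix} r + k - s \\ r - t \end{bmatrix} = 0. \end{equation*}
   Context: $q$ is an indeterminate, $r \ge 2$ is a fixed integer, $[n] = \frac{q^n - q^{-n}}{q - q^{-1}}$ for $n \in \mathbb{Z}$, $[m]^! = [1][2]\cdots[m]$, and for $n \in \mathbb{Z}$, $m \in \mathbb{N}$, the quantum binomial coefficient is $\begin{bmatrix} n \\ m\end{bmatrix} = \frac{[n][n-1]\cdots[n-m+1]}{[m]^!}$ for $m \ge 1$ and $\begin{bmatrix} n \\ 0\end{bmatrix} = 1$ (so the top entry may be negative). *)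

(* Defs.v *)
(* q is an indeterminate: we work in the field of rational
   functions Q(q) = {fraction {poly rat}}, with q the image of 'X. *)
From HB Require Import structures.
From mathcomp Require Import all_boot all_order all_algebra fraction.
Set Implicit Arguments. Unset Strict Implicit. Unset Printing Implicit Defensive.
Import Order.TTheory GRing.Theory Num.Theory.
Local Open Scope ring_scope.

Definition QF : fieldType := {fraction {poly rat}}.
Definition q : QF := tofrac 'X.

Definition qint (n : int) : QF := (q ^ n - q ^ (- n)) / (q - q^-1).

Definition qfact (m : nat) : QF := \prod_(1 <= i < m.+1) qint i%:Z.

Definition qbinom (n : int) (m : nat) : QF :=
  (\prod_(i < m) qint (n - i%:Z)) / qfact m.

(* Main.v *)
Require Import Defs.
From HB Require Import structures.
From mathcomp Require Import all_boot all_order all_algebra fraction ring zify.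
Import Order.TTheory GRing.Theory Num.Theory.
Local Open Scope ring_scope.

Lemma q_neq0 : q != 0.
Proof. by rewrite /q tofrac_eq0 polyX_eq0. Qed.

Lemma qpow_neq1 n : (0 < n)%N -> q ^+ n != 1.
Proof.
move=> n0; rewrite /q -tofracXn -tofrac1 tofrac_eq; apply/eqP => h.
by have := congr1 (fun p : {poly rat} => size p) h; rewrite /= size_polyXn size_poly1; case: n n0 {h}.
Qed.

Lemma qdiff_neq0 n : (0 < n)%N -> q ^ n%:Z - q ^ (- n%:Z) != 0.
Proof.
move=> n0; rewrite -invr_expz subr_eq0; apply/eqP => h.
have qn0 : q ^ n%:Z != 0 by rewrite expfz_neq0 // q_neq0.
have : q ^ n%:Z * q ^ n%:Z = 1 by rewrite {2}h mulfV.
rewrite -exprD; apply/eqP; apply: qpow_neq1; by rewrite addn_gt0 n0.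
Qed.

Lemma qX_neq0 : q - q^-1 != 0.
Proof. by have := @qdiff_neq0 1 isT; rewrite expr1z exprN1. Qed.

Lemma qint_neq0 n : (0 < n)%N -> qint n%:Z != 0.
Proof. by move=> n0; rewrite /qint mulf_neq0 ?invr_eq0 ?qdiff_neq0 ?qX_neq0. Qed.

Lemma qfact_neq0 m : qfact m != 0.
Proof.
rewrite /qfact big_add1 /= big_mkord prodf_seq_neq0.
by apply/allP => i _; apply: qint_neq0.
Qed.

Lemma qM (a b : int) : q ^ a * q ^ b = q ^ (a + b).
Proof. by rewrite expfzDr // q_neq0. Qed.

Lemma qint_id (a n : int) :
  q ^ (a + 1) * qint (n - a) + q ^ (a - n) * qint (a + 1) = qint (n + 1).
Proof.
rewrite /qint !mulrA -mulrDl; congr (_ * _).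
rewrite !mulrBr !qM.
have -> : a + 1 + (n - a) = n + 1 by ring.
have -> : a + 1 + - (n - a) = a - n + (a + 1) by ring.
have -> : a - n + - (a + 1) = - (n + 1) by ring.
by rewrite addrA subrK.
Qed.

Lemma qint0 : qint 0 = 0.
Proof. by rewrite /qint oppr0 subrr mul0r. Qed.

Lemma qbinom0 n : qbinom n 0 = 1.
Proof. by rewrite /qbinom big_ord0 /qfact big_geq // divr1. Qed.

Lemma qbinom_over (r : nat) : qbinom r%:Z r.+1 = 0.
Proof. by rewrite /qbinom big_ord_recr /= subrr qint0 mulr0 mul0r. Qed.

Lemma pascal_aux (K : fieldType) (Q N a b A F : K) : F != 0 -> Q != 0 ->
  (a * N + b * Q) * A / (F * Q) = a * (A * N / (F * Q)) + b * (A / F).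
Proof. by move=> F0 Q0; field; rewrite F0 Q0. Qed.

Lemma qbinom_S (n : int) (s : nat) :
  qbinom (n + 1) s.+1 = q ^ (s.+1%:Z) * qbinom n s.+1 + q ^ (s%:Z - n) * qbinom n s.
Proof.
rewrite /qbinom big_ord_recl /= [in RHS]big_ord_recr /=.
have -> : \prod_(i < s) qint (n + 1 - (bump 0 i)%:Z) = \prod_(i < s) qint (n - i%:Z).
  apply: eq_bigr => i _; congr qint; rewrite /bump /= add1n intS; ring.
rewrite /qfact big_nat_recr //=.
set A := \prod_(i < s) qint (n - i%:Z).
set F := \prod_(1 <= i < s.+1) qint i%:Z.
have F0 : F != 0 by apply: qfact_neq0.
have S0 : qint s.+1%:Z != 0 by apply: qint_neq0.
rewrite intS (addrC 1 s%:Z) subr0 -(qint_id s%:Z n).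
move: S0; rewrite intS (addrC 1 s%:Z).
move: (qint (s%:Z + 1)) (qint (n - s%:Z)) (q ^ (s%:Z+1)) (q ^ (s%:Z - n)) A F F0 => Q N a b A' F' F0' Q0.
exact: (@pascal_aux QF Q N a b A' F' F0' Q0).
Qed.

Definition D (r : nat) (f : nat -> QF) :=
  \sum_(s < r.+1) (-1) ^+ s * qbinom r%:Z s * f s.

Lemma DS r f : D r.+1 f = D r (fun s => q ^ s%:Z * f s - q ^ (s%:Z - r%:Z) * f s.+1).
Proof.
rewrite /D.
have E1 : forall i : 'I_r.+1, (-1) ^+ i * qbinom r%:Z i * (q ^ i%:Z * f i - q ^ (i%:Z - r%:Z) * f i.+1)
  = (-1) ^+ i * qbinom r%:Z i * q ^ i%:Z * f i - (-1) ^+ i * qbinom r%:Z i * q ^ (i%:Z - r%:Z) * f i.+1.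
  move=> i. ring.
rewrite (eq_bigr _ (fun i _ => E1 i)) sumrB.
rewrite big_ord_recl [in RHS]big_ord_recl /= !qbinom0 expr0z.
have E : forall i : 'I_r.+1, (-1) ^+ (bump 0 i) * qbinom r.+1%:Z (bump 0 i) * f (bump 0 i)
   = (-1) ^+ i.+1 * qbinom r%:Z i.+1 * q ^ (i.+1%:Z) * f i.+1
     - (-1) ^+ i * qbinom r%:Z i * q ^ (i%:Z - r%:Z) * f i.+1.
  move=> i; rewrite /bump /= add1n.
  have -> : r.+1%:Z = r%:Z + 1 by rewrite intS addrC.
  rewrite qbinom_S exprS. ring.
rewrite (eq_bigr _ (fun i _ => E i)) sumrB big_ord_recr /= qbinom_over mulr0 !mul0r addr0.
rewrite !expr0 !mul1r addrA.
by [].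
Qed.

Lemma D_ext r f g : (forall s, f s = g s) -> D r f = D r g.
Proof. by move=> h; apply: eq_bigr => i _; rewrite h. Qed.

Lemma D0 r : D r (fun _ => 0) = 0.
Proof. by apply: big1 => i _; rewrite mulr0. Qed.

Lemma DZ r a f : D r (fun s => a * f s) = a * D r f.
Proof. rewrite /D mulr_sumr; apply: eq_bigr => i _; ring. Qed.

Lemma D_sum r d (a : nat -> QF) (g : nat -> nat -> QF) :
  D r (fun s => \sum_(j < d) a j * g j s) = \sum_(j < d) a j * D r (g j).
Proof.
rewrite /D (eq_bigr (fun i : 'I_r.+1 => \sum_(j < d) (-1) ^+ i * qbinom r%:Z i * (a j * g j i))).
  rewrite exchange_big; apply: eq_bigr => j _; rewrite mulr_sumr; apply: eq_bigr => i _; ring.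
by move=> i _; rewrite mulr_sumr.
Qed.

Lemma DB r j : (j < r)%N -> D r (fun s => q ^ ((r%:Z - 1 - 2 * j%:Z) * s%:Z)) = 0.
Proof.
elim: r j => [|r IH] j ltj //.
rewrite DS; case: j ltj => [|j] ltj.
  rewrite -(D0 r); apply: D_ext => s; rewrite !qM intS.
  by rewrite (_ : _ + _ = s%:Z - r%:Z + (1 + r%:Z - 1 - 2 * 0%N%:Z) * (s.+1)%:Z) ?subrr // intS; ring.
rewrite (@D_ext r _ (fun s : nat => (1 - q ^ (- 2 * j%:Z - 2)) * q ^ ((r%:Z - 1 - 2 * j%:Z) * s%:Z))).
  by rewrite DZ IH // mulr0.
move=> s; rewrite [RHS]mulrBl mul1r !qM; congr (q ^ _ - q ^ _); rewrite !intS; ring.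
Qed.

Definition lf (p : QF * QF) (s : nat) := p.1 * q ^ s%:Z + p.2 * q ^ (- s%:Z).

Lemma expand (L : seq (QF * QF)) : exists a : nat -> QF, forall s : nat,
  \prod_(p <- L) lf p s = \sum_(j < (size L).+1) a j * q ^ (((size L)%:Z - 2 * j%:Z) * s%:Z).
Proof.
elim: L => [|p L [a IH]].
  by exists (fun _ => 1) => s; rewrite big_nil big_ord1 /= mulr0 subr0 mul0r expr0z mulr1.
set d := size L.
exists (fun j => p.1 * (if (j < d.+1)%N then a j else 0) + (if j is j'.+1 then p.2 * a j' else 0)).
move=> s; rewrite big_cons IH /= -/d.
rewrite (eq_bigr (fun j : 'I_d.+2 => p.1 * (if (j < d.+1)%N then a j else 0) * q ^ ((d.+1%:Z - 2 * j%:Z) * s%:Z)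
   + (if (j : nat) is j'.+1 then p.2 * a j' else 0) * q ^ ((d.+1%:Z - 2 * j%:Z) * s%:Z))); last first.
  by move=> j _; rewrite mulrDl.
rewrite big_split /= [X in _ = X + _]big_ord_recr /= ltnn mulr0 mul0r addr0 [X in _ = _ + X]big_ord_recl /= mul0r add0r.
rewrite mulr_sumr -big_split /=; apply: eq_bigr => j _.
rewrite ltn_ord /lf mulrDl; congr (_ + _).
  rewrite -!mulrA; congr (_ * _); rewrite mulrCA; congr (_ * _); rewrite qM; congr (q ^ _); rewrite intS; ring.
rewrite -!mulrA; congr (_ * _); rewrite mulrCA; congr (_ * _); rewrite qM; congr (q ^ _); rewrite /bump /= !intS; ring.
Qed.

Definition lin (x : int) : QF * QF := (- q ^ (- x) / (q - q^-1), q ^ x / (q - q^-1)).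

Lemma qint_lf (x : int) (s : nat) : qint (x - s%:Z) = lf (lin x) s.
Proof.
rewrite /qint /lf /= (_ : - (x - s%:Z) = - x + s%:Z); last by ring.
by rewrite -!qM; ring.
Qed.

Lemma prodq (n : int) (m s : nat) :
  \prod_(i < m) qint (n - s%:Z - i%:Z) = \prod_(p <- [seq lin (n - i%:Z) | i <- iota 0 m]) lf p s.
Proof.
have -> : iota 0 m = index_iota 0 m by rewrite /index_iota subn0.
rewrite big_map big_mkord; apply: eq_bigr => i _.
by rewrite -qint_lf (_ : n - s%:Z - i%:Z = n - i%:Z - s%:Z) //; ring.
Qed.

Theorem lemma5p6 (r t : nat) (k : int) :
  (2 <= r)%N -> (1 <= t)%N -> (t <= r)%N ->
  \sum_(s < r.+1)
     (-1) ^+ s * qbinom r%:Z s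
       * qbinom (t%:Z + k - s%:Z - 1) t.-1
       * qbinom (r%:Z + k - s%:Z) (r - t)
  = 0.
Proof.
move=> r2 t1 tr.
set L := [seq lin (t%:Z + k - 1 - i%:Z) | i <- iota 0 t.-1] ++ [seq lin (r%:Z + k - i%:Z) | i <- iota 0 (r - t)].
set C := (qfact t.-1)^-1 * (qfact (r - t))^-1.
have -> : \sum_(s < r.+1)
     (-1) ^+ s * qbinom r%:Z s
       * qbinom (t%:Z + k - s%:Z - 1) t.-1
       * qbinom (r%:Z + k - s%:Z) (r - t)
   = D r (fun s => C * \prod_(p <- L) lf p s).
  apply: eq_bigr => s _.
  have -> : \prod_(p <- L) lf p s = (\prod_(p <- [seq lin (t%:Z + k - 1 - i%:Z) | i <- iota 0 t.-1]) lf p s) * (\prod_(p <- [seq lin (r%:Z + k - i%:Z) | i <- iota 0 (r - t)]) lf p s) by rewrite big_cat.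
  rewrite -!prodq /qbinom /C.
  rewrite (eq_bigr (fun i : 'I_t.-1 => qint (t%:Z + k - 1 - s%:Z - i%:Z))); first by ring.
  by move=> i _; rewrite (_ : t%:Z + k - s%:Z - 1 = t%:Z + k - 1 - s%:Z) //; ring.
rewrite DZ.
have [a Ha] := expand L.
have sz : size L = r.-1 by rewrite /L size_cat !size_map !size_iota; lia.
case: r r2 tr L C sz Ha => // d _ tr L C sz Ha.
rewrite sz /= in Ha.
rewrite (@D_ext _ _ _ Ha) (D_sum _ _ a (fun j s => q ^ ((d%:Z - 2 * j%:Z) * s%:Z))).
rewrite big1 ?mulr0 // => j _.
rewrite (_ : d%:Z = d.+1%:Z - 1); last by rewrite intS; ring.
by rewrite DB ?mulr0.
Qed.
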